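(* Let $R$ be a ring. The following are equivalent: (1) $R$ is feckly clean; (2) for any disjoint closed sets $A,B$ of $\operatorname{Max}(R)$ there exists $e\in R$ such that $A\subseteq V(e)$, $B\subseteq V(1-e)$ and $eR(1-e)\subseteq J(R)$; (3) for any $a\in R$ there exists $e\in R$ such that $V(a)\subseteq V(e)$, $V(1-a)\subseteq V(1-e)$ and $eR(1-e)\subseteq J(R)$.
   Context: Rings are associative with identity, not necessarily commutative; $J(R)$ is the Jacobson radical. An element $u\in R$ is full if $RuR=R$. An element $a\in R$ is feckly clean if there exist $e\in R$ and a full element $u\in R$ with $a=e+u$ and $eR(1-e)\subseteq J(R)$; $R$ is feckly clean if every element is feckly clean. $\operatorname{Max}(R)$ is the set of all maximal (two-sided) ideals of $R$, topologized so that the closed sets are exactly the sets $V(I)=\{P\in\operatorname{Max}(R): I\subseteq P\}$ for ideals $I$ of $R$. For $a\in R$, $V(a)=V(RaR)$. *)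

(* Defs.v *)
(* Rings: pzRingType (associative, with 1, not necessarily
   commutative; the zero ring is allowed). Subsets of R are predicates R -> Prop. *)
From HB Require Import structures.
From mathcomp Require Import all_boot all_order all_algebra.
Set Implicit Arguments. Unset Strict Implicit. Unset Printing Implicit Defensive.
Import GRing.Theory.
Local Open Scope ring_scope.

Section Defs.
Variable R : pzRingType.

Definition is_ideal (I : R -> Prop) : Prop :=
  [/\ I 0, (forall x y, I x -> I y -> I (x - y)),
      (forall r x, I x -> I (r * x)) & (forall r x, I x -> I (x * r))].

Definition is_left_ideal (L : R -> Prop) : Prop :=
  [/\ L 0, (forall x y, L x -> L y -> L (x - y)) & (forall r x, L x -> L (r * x))].

Definition is_max_ideal (P : R -> Prop) : Prop :=
  [/\ is_ideal P, ~ P 1 &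
      forall I, is_ideal I -> (forall x, P x -> I x) -> I 1 \/ (forall x, I x -> P x)].

Definition is_max_left_ideal (L : R -> Prop) : Prop :=
  [/\ is_left_ideal L, ~ L 1 &
      forall I, is_left_ideal I -> (forall x, L x -> I x) -> I 1 \/ (forall x, I x -> L x)].

Definition jacobson (x : R) : Prop :=
  forall L, is_max_left_ideal L -> L x.

(* R a R : the two-sided ideal generated by a (finite sums of r a s) *)
Definition RaR (a : R) (x : R) : Prop :=
  exists s : seq (R * R), x = \sum_(p <- s) p.1 * a * p.2.

Definition full (u : R) : Prop := forall x, RaR u x.

Definition corner_in_J (e : R) : Prop :=
  forall r, jacobson (e * r * (1 - e)).

Definition feckly_clean_elt (a : R) : Prop :=
  exists e u, a = e + u /\ full u /\ corner_in_J e.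

Definition feckly_clean_ring : Prop := forall a, feckly_clean_elt a.

(* Max(R) and its topology: a subset of Max(R) is a predicate on (R -> Prop)
   that holds only for maximal ideals. *)
Definition V (I : R -> Prop) (P : R -> Prop) : Prop :=
  is_max_ideal P /\ (forall x, I x -> P x).

Definition Velt (a : R) : (R -> Prop) -> Prop := V (RaR a).

Definition closed_Max (A : (R -> Prop) -> Prop) : Prop :=
  exists I, is_ideal I /\ (forall P, A P <-> V I P).

Definition subset_Max (A B : (R -> Prop) -> Prop) : Prop := forall P, A P -> B P.

Definition disjoint_Max (A B : (R -> Prop) -> Prop) : Prop := forall P, ~ (A P /\ B P).

End Defs.

(* Main.v *)
Require Import Defs.
From HB Require Import structures.
From mathcomp Require Import all_boot all_order all_algebra.
From Stdlib Require Import Classical.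
Import GRing.Theory.
Local Open Scope ring_scope.
Set Implicit Arguments. Unset Strict Implicit.
From Stdlib Require Import FunctionalExtensionality PropExtensionality.
From mathcomp Require classical_sets.
Lemma zorn_gen (T : Type) (Q : (T -> Prop) -> Prop) (I : T -> Prop) (one i0 : T) :
  Q I -> ~ I one -> I i0 ->
  (forall F : (T -> Prop) -> Prop, (exists X, F X) ->
     (forall X, F X -> Q X /\ (forall x, I x -> X x) /\ ~ X one) ->
     (forall X Y, F X -> F Y -> (forall x, X x -> Y x) \/ (forall x, Y x -> X x)) ->
     Q (fun x => exists2 X, F X & X x)) ->
  exists M, [/\ Q M, (forall x, I x -> M x), ~ M one &
     forall Y, Q Y -> (forall x, M x -> Y x) -> Y one \/ (forall x, Y x -> M x)].
Proof.
move=> QI nI Ii0 Hch.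
pose good (X : T -> Prop) := X = (fun _ => False) \/
   (Q X /\ (forall x, I x -> X x) /\ ~ X one).
have [|A [gA maxA]] := @classical_sets.Zorn_bigcup T good.
  { move=> F FP tot.
  case: (classic (exists X, F X /\ exists x, X x)) => [[X0 [FX0 [x0 X0x0]]]|none].
    right.
    have memF : forall X, F X -> (exists x, X x) ->
        Q X /\ (forall x, I x -> X x) /\ ~ X one.
      by move=> X FX [x Xx]; case: (FP X FX) => // E; rewrite E in Xx.
    pose F' := fun X => F X /\ exists x, X x.
    have EU : (fun x => exists2 X, F X & X x) = (fun x => exists2 X, F' X & X x).
      apply: functional_extensionality => x; apply: propositional_extensionality.
      split; move=> [X FX Xx]; exists X => //; last by case: FX.
      by split => //; exists x.
    have [Q0 [I0 _]] := memF X0 FX0 (ex_intro _ x0 X0x0).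
    split; [| split].
    - rewrite /classical_sets.bigcup EU; apply: Hch.
      + by exists X0; split => //; exists x0.
      + by move=> X [FX ne]; apply: memF.
      + move=> X Y [FX _] [FY _]; case: (tot X Y FX FY) => H; [left|right]; exact: H.
    - by move=> x Ix; exists X0 => //; apply: I0.
    - move=> [X FX Xone]; have [_ [_ nX]] := memF X FX (ex_intro _ one Xone); exact: nX.
  left; apply: functional_extensionality => x; apply: propositional_extensionality.
  split => // -[X FX Xx]; apply: none; exists X; split => //; exists x; exact: Xx. }
case: gA => [A0|[QA [IA nA]]].
  exfalso; apply: (maxA I); last by right.
  rewrite A0; split => // H; exact: (H i0 Ii0).
exists A; split => // Y QY AY.
case: (classic (Y one)) => [|nY]; first by left.
right => x Yx; apply: NNPP => nAx.
apply: (maxA Y); last by right; split => //; split => // z Iz; apply: AY; apply: IA.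
split => // H; exact: nAx (H x Yx).
Qed.
Section S.
Variable R : pzRingType.
Implicit Types (I K P L : R -> Prop).

Lemma ideal_opp I x : is_ideal I -> I x -> I (- x).
Proof. by case=> I0 IB _ _ Ix; rewrite -sub0r; apply: IB. Qed.

Lemma ideal_add I x y : is_ideal I -> I x -> I y -> I (x + y).
Proof.
move=> hI Ix Iy; have := ideal_opp hI Iy; case: hI => _ IB _ _ Iy'.
by rewrite -[y]opprK; apply: IB.
Qed.

Lemma lideal_add L x y : is_left_ideal L -> L x -> L y -> L (x + y).
Proof.
case=> L0 LB _ Lx Ly.
have Lny : L (- y) by rewrite -sub0r; apply: LB.
by rewrite -[y]opprK; apply: LB.
Qed.

Lemma ideal_left I : is_ideal I -> is_left_ideal I.
Proof. by case. Qed.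

Lemma ideal_sum I (T : Type) (s : seq T) (F : T -> R) :
  is_ideal I -> (forall i, I (F i)) -> I (\sum_(i <- s) F i).
Proof.
move=> hI HF; elim: s => [|x s IH]; first by rewrite big_nil; case: hI.
by rewrite big_cons; apply: ideal_add.
Qed.

Lemma RaR_ideal (a : R) : is_ideal (RaR a).
Proof.
split.
- by exists [::]; rewrite big_nil.
- move=> x y [s1 ->] [s2 ->]; exists (s1 ++ map (fun p => (- p.1, p.2)) s2).
  by rewrite big_cat big_map /= -sumrN; congr (_ + _); apply: eq_bigr => p _;
    rewrite mulNr mulNr.
- move=> r x [s ->]; exists (map (fun p => (r * p.1, p.2)) s).
  by rewrite big_map mulr_sumr; apply: eq_bigr => p _; rewrite !mulrA.
- move=> r x [s ->]; exists (map (fun p => (p.1, p.2 * r)) s).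
  by rewrite big_map mulr_suml; apply: eq_bigr => p _; rewrite !mulrA.
Qed.

Lemma RaR_self (a : R) : RaR a a.
Proof. by exists [:: (1, 1)]; rewrite big_seq1 /= mul1r mulr1. Qed.

Lemma RaR_sub I (a x : R) : is_ideal I -> I a -> RaR a x -> I x.
Proof.
move=> hI Ia [s ->]; apply: ideal_sum => // p.
case: hI => _ _ hl hr; apply: hr; exact: hl.
Qed.

Lemma Velt_iff (a : R) P : Velt a P <-> is_max_ideal P /\ P a.
Proof.
split; first by case=> hP H; split => //; apply: H; exact: RaR_self.
move=> [hP Pa]; split => // x; apply: RaR_sub => //; by case: hP.
Qed.

Lemma max_not1 P (x : R) : is_max_ideal P -> P x -> P (1 - x) -> False.
Proof.
move=> [hI n1 _] Px Px'; apply: n1.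
by have := ideal_add hI Px Px'; rewrite addrC subrK.
Qed.

Lemma sum_ideal I K : is_ideal I -> is_ideal K ->
  is_ideal (fun z => exists i k, [/\ I i, K k & z = i + k]).
Proof.
move=> hI hK; have [I0 IB Il Ir] := hI; have [K0 KB Kl Kr] := hK; split.
- by exists 0, 0; rewrite addr0.
- move=> x y [i [k [Ii Kk ->]]] [i' [k' [Ii' Kk' ->]]].
  exists (i - i'), (k - k'); split; [exact: IB | exact: KB|].
  by rewrite opprD addrACA.
- move=> r x [i [k [Ii Kk ->]]]; exists (r * i), (r * k); split; auto.
  by rewrite mulrDr.
- move=> r x [i [k [Ii Kk ->]]]; exists (i * r), (k * r); split; auto.
  by rewrite mulrDl.
Qed.


Lemma union2 (F : (R -> Prop) -> Prop) x y :
  (forall X Y, F X -> F Y -> (forall x, X x -> Y x) \/ (forall x, Y x -> X x)) ->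
  (exists2 X, F X & X x) -> (exists2 X, F X & X y) ->
  exists Z, [/\ F Z, Z x & Z y].
Proof.
move=> tot [X FX Xx] [Y FY Yy]; case: (tot X Y FX FY) => H.
  by exists Y; split => //; apply: H.
by exists X; split => //; apply: H.
Qed.

Lemma exists_max_ideal I : is_ideal I -> ~ I 1 ->
  exists P, is_max_ideal P /\ (forall x, I x -> P x).
Proof.
move=> hI n1.
have I00 : I 0 by case: hI.
have [|M [QM IM nM maxM]] := zorn_gen hI n1 I00.
- move=> F [X0 FX0] memF tot; split.
  + by exists X0 => //; have [[]] := memF X0 FX0.
  + move=> x y Ux Uy; have [Z [FZ Zx Zy]] := union2 tot Ux Uy.
    by exists Z => //; have [[_ B _ _] _] := memF Z FZ; apply: B.
  + move=> r x [Z FZ Zx]; exists Z => //; have [[_ _ B _] _] := memF Z FZ; exact: B.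
  + move=> r x [Z FZ Zx]; exists Z => //; have [[_ _ _ B] _] := memF Z FZ; exact: B.
- by exists M; split.
Qed.

Lemma exists_max_left I : is_ideal I -> ~ I 1 ->
  exists L, is_max_left_ideal L /\ (forall x, I x -> L x).
Proof.
move=> hI n1.
have I00 : I 0 by case: hI.
have [|M [QM IM nM maxM]] := zorn_gen (ideal_left hI) n1 I00.
- move=> F [X0 FX0] memF tot; split.
  + by exists X0 => //; have [[]] := memF X0 FX0.
  + move=> x y Ux Uy; have [Z [FZ Zx Zy]] := union2 tot Ux Uy.
    by exists Z => //; have [[_ B _] _] := memF Z FZ; apply: B.
  + move=> r x [Z FZ Zx]; exists Z => //; have [[_ _ B] _] := memF Z FZ; exact: B.
- by exists M; split.
Qed.

Lemma colon_max L (s : R) : is_max_left_ideal L -> ~ L s ->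
  is_max_left_ideal (fun x => L (x * s)).
Proof.
move=> [[L0 LB Ll] n1 maxL] ns; split.
- split; first by rewrite mul0r.
  + by move=> x y Lx Ly; rewrite mulrBl; apply: LB.
  + by move=> r x Lx; rewrite -mulrA; apply: Ll.
- by rewrite mul1r.
move=> I [I0 IB Il] sub.
case: (classic (forall y, I y -> L (y * s))) => [H|]; first by right.
move=> /not_all_ex_not [y Hy]; have [Iy nys] := imply_to_and _ _ Hy; left.
pose K := fun z => exists l t, L l /\ z = l + t * (y * s).
have hK : is_left_ideal K.
  split.
  - by exists 0, 0; rewrite mul0r addr0.
  - move=> a b [l [t [Ll' ->]]] [l' [t' [Ll'' ->]]].
    exists (l - l'), (t - t'); split; first exact: LB.
    by rewrite mulrBl opprD addrACA.
  - move=> r a [l [t [Ll' ->]]]; exists (r * l), (r * t); split; first exact: Ll.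
    by rewrite mulrDr mulrA.
have [|K1|KL] := maxL K hK.
  - by move=> x Lx; exists x, 0; rewrite mul0r addr0.
  - have [_ _ Kl] := hK; have := Kl s 1 K1; rewrite mulr1 => -[l [t [Ll' Es]]].
    have H1 : I (1 - t * y).
      apply: sub; rewrite mulrBl mul1r -mulrA.
      have -> : s - t * (y * s) = l by rewrite {1}Es addrK.
      exact: Ll'.
    have H2 : I (t * y) by apply: Il.
    have : I ((1 - t * y) - - (t * y)) by apply: (IB) => //; rewrite -sub0r; apply: (IB).
    by rewrite opprK subrK.
exfalso; apply: nys; apply: KL; exists 0, 1; by rewrite add0r mul1r.
Qed.

Lemma jacobson_max P x : is_max_ideal P -> jacobson x -> P x.
Proof.
move=> hP Jx; have [hI n1 maxP] := hP.
have [L [hL PL]] := exists_max_left hI n1.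
have [[L0 LB Ll] Ln1 _] := hL.
pose ann := fun z => forall s, L (z * s).
have hann : is_ideal ann.
  split.
  - by move=> s; rewrite mul0r.
  - by move=> a b Ha Hb s; rewrite mulrBl; apply: LB.
  - by move=> r a Ha s; rewrite -mulrA; apply: Ll.
  - by move=> r a Ha s; rewrite -mulrA.
have [|ann1|annP] := maxP ann hann.
- move=> z Pz s; apply: PL; have [_ _ _ Hr] := hI; exact: Hr.
- by exfalso; apply: Ln1; have := ann1 1; rewrite mulr1.
apply: annP => s; case: (classic (L s)) => Ls; first exact: Ll.
exact: (Jx _ (colon_max hL Ls)).
Qed.

Lemma RaR_prod P (e w w' : R) : is_ideal P ->
  (forall r, P (e * r * (1 - e))) -> RaR e w -> RaR (1 - e) w' -> P (w * w').
Proof.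
move=> hP He [s ->] [s' ->]; rewrite mulr_suml; apply: ideal_sum => // p.
rewrite mulr_sumr; apply: ideal_sum => // q.
have -> : p.1 * e * p.2 * (q.1 * (1 - e) * q.2) =
          p.1 * (e * (p.2 * q.1) * (1 - e) * q.2) by rewrite !mulrA.
by case: hP => _ _ Hl Hr; apply: Hl; apply: Hr.
Qed.

Lemma dichotomy P (e : R) : is_max_ideal P -> corner_in_J e -> P e \/ P (1 - e).
Proof.
move=> hP He; have He' : forall r, P (e * r * (1 - e)).
  by move=> r; apply: jacobson_max.
have [hI n1 maxP] := hP.
case: (classic (P e)) => Pe; first by left.
case: (classic (P (1 - e))) => Pe'; first by right.
exfalso; apply: n1.
have gen : forall a, ~ P a -> exists p w, [/\ P p, RaR a w & 1 = p + w].
  move=> a na; have hS := sum_ideal hI (RaR_ideal a).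
  have [|[i [k [Ii Kk E]]]|SP] := maxP _ hS.
  - by move=> x Px; exists x, 0; split => //; [case: (RaR_ideal a) | rewrite addr0].
  - by exists i, k.
  exfalso; apply: na; apply: SP; exists 0, a; split; [by case: hI | exact: RaR_self | by rewrite add0r].
have [p [w [Pp Rw E1]]] := gen _ Pe.
have [p' [w' [Pp' Rw' E2]]] := gen _ Pe'.
have -> : 1 = (p + w) * (p' + w') by rewrite -E1 -E2 mulr1.
have [_ _ Hl Hr] := hI.
rewrite mulrDl !mulrDr; apply: ideal_add => //; apply: ideal_add => //.
- exact: Hr.
- exact: Hr.
- exact: Hl.
exact: RaR_prod.
Qed.

Lemma full_iff (u : R) : full u <-> forall P, is_max_ideal P -> ~ P u.
Proof.
split.
  move=> fu P [hI n1 _] Pu; apply: n1; exact: RaR_sub (fu 1).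
move=> H; case: (classic (RaR u 1)) => [R1 x|n1].
  have [_ _ _ Hr] := RaR_ideal u; by have := Hr x _ R1; rewrite mul1r.
have [P [hP sub]] := exists_max_ideal (RaR_ideal u) n1.
by exfalso; apply: (H P hP); apply: sub; exact: RaR_self.
Qed.

End S.

Theorem theorem2p3 (R : pzRingType) :
  (feckly_clean_ring R <->
   (forall A B : (R -> Prop) -> Prop,
      closed_Max A -> closed_Max B -> disjoint_Max A B ->
      exists e : R, subset_Max A (Velt e) /\ subset_Max B (Velt (1 - e))
                    /\ corner_in_J e))
  /\
  (feckly_clean_ring R <->
   (forall a : R, exists e : R,
      subset_Max (Velt a) (Velt e) /\ subset_Max (Velt (1 - a)) (Velt (1 - e))
      /\ corner_in_J e)).
Proof.
have h13 : feckly_clean_ring R -> forall a : R, exists e : R,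
      subset_Max (Velt a) (Velt e) /\ subset_Max (Velt (1 - a)) (Velt (1 - e))
      /\ corner_in_J e.
  move=> fc a; have [e [u [E [fu ce]]]] := fc (1 - a).
  have Eu : u = 1 - a - e by rewrite E addrAC subrr add0r.
  exists e; split; [|split] => //.
  - move=> P /Velt_iff [hP Pa]; apply/Velt_iff; split => //.
    case: (dichotomy hP ce) => // Pe'; exfalso.
    apply: ((full_iff u).1 fu P hP); rewrite Eu addrAC.
    by have [[_ IB _ _] _ _] := hP; apply: IB.
  - move=> P /Velt_iff [hP Pa]; apply/Velt_iff; split => //.
    case: (dichotomy hP ce) => // Pe; exfalso.
    apply: ((full_iff u).1 fu P hP); rewrite Eu.
    by have [[_ IB _ _] _ _] := hP; apply: IB.
have h31 : (forall a : R, exists e : R,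
      subset_Max (Velt a) (Velt e) /\ subset_Max (Velt (1 - a)) (Velt (1 - e))
      /\ corner_in_J e) -> feckly_clean_ring R.
  move=> H3 a; have [e [s1 [s2 ce]]] := H3 (1 - a).
  exists e, (a - e); split; first by rewrite addrC subrK.
  split => //; apply/full_iff => P hP Pae.
  have [[_ IB _ _] _ _] := hP.
  case: (dichotomy hP ce) => [Pe|Pe'].
  - have Pa : P a by have := ideal_add (let: And3 h _ _ := hP in h) Pae Pe; rewrite subrK.
    have E : 1 - (1 - a) = a by rewrite opprB addrC subrK.
    have := s2 P; rewrite E => /(_ (proj2 (Velt_iff a P) (conj hP Pa))).
    move=> /Velt_iff [_ Pe']; exact: max_not1 hP Pe Pe'.
  - have Pa : P (1 - a).
      have <- : 1 - e - (a - e) = 1 - a by rewrite opprB addrA subrK.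
      exact: IB.
    have := s1 P (proj2 (Velt_iff _ P) (conj hP Pa)) => /Velt_iff [_ Pe].
    exact: max_not1 hP Pe Pe'.
have h23 : (forall A B : (R -> Prop) -> Prop,
      closed_Max A -> closed_Max B -> disjoint_Max A B ->
      exists e : R, subset_Max A (Velt e) /\ subset_Max B (Velt (1 - e))
                    /\ corner_in_J e) ->
   (forall a : R, exists e : R,
      subset_Max (Velt a) (Velt e) /\ subset_Max (Velt (1 - a)) (Velt (1 - e))
      /\ corner_in_J e).
  move=> H2 a; apply: H2.
  - by exists (RaR a); split; [exact: RaR_ideal | move=> P].
  - by exists (RaR (1 - a)); split; [exact: RaR_ideal | move=> P].
  - move=> P [/Velt_iff [hP Pa] /Velt_iff [_ Pa']]; exact: max_not1 hP Pa Pa'.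
have h32 : (forall a : R, exists e : R,
      subset_Max (Velt a) (Velt e) /\ subset_Max (Velt (1 - a)) (Velt (1 - e))
      /\ corner_in_J e) ->
   (forall A B : (R -> Prop) -> Prop,
      closed_Max A -> closed_Max B -> disjoint_Max A B ->
      exists e : R, subset_Max A (Velt e) /\ subset_Max B (Velt (1 - e))
                    /\ corner_in_J e).
  move=> H3 A B [I [hI HA]] [K [hK HB]] dis.
  have hS := sum_ideal hI hK.
  have : exists i k, [/\ I i, K k & 1 = i + k].
    apply: NNPP => n; have [P [hP sub]] := exists_max_ideal hS n.
    apply: (dis P); split; [apply/HA | apply/HB]; split => // x Hx; apply: sub.
    + by exists x, 0; split => //; [case: hK | rewrite addr0].
    + by exists 0, x; split => //; [case: hI | rewrite add0r].
  move=> [i [k [Ii Kk E]]]; have [e [s1 [s2 ce]]] := H3 i.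
  exists e; split; [|split] => //.
  - move=> P /HA [hP IP]; apply: s1; apply/Velt_iff; split => //; exact: IP.
  - move=> P /HB [hP KP]; apply: s2; apply/Velt_iff; split => //.
    have -> : 1 - i = k by rewrite E (addrC i k) addrK.
    exact: KP.
split; split.
- by move=> fc; apply: h32; apply: h13.
- by move=> H; apply: h31; apply: h23.
- exact: h13.
- exact: h31.
Qed.
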